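(* Let $\alpha\in(0,1)$, $R>0$, and consider the initial state $(x_O,y_O,y_T)$ at time $0$ of the observer–target system. Let $m=\sqrt{1-\alpha^2}/\alpha$ and let $W=(x_O,y_O-R)$ be the bottom point of the observation disk. If $W$ lies on or above the Decision Line, i.e. $y_O-R-y_T\ge m|x_O|$, then the optimal observation time equals $\frac{2R}{1-\alpha}$ (the state belongs to $\mathscr B_3$).
   Context: Target: position $(0,y_T(t))$, $\dot y_T=1$, $y_T(0)=y_T$. Observer: position $(x_O(t),y_O(t))$ starting at $(x_O,y_O)$, $\dot x_O=\alpha\cos\psi(t)$, $\dot y_O=\alpha\sin\psi(t)$, heading $\psi:[0,\infty)\to\mathbb R$ a measurable control. Observation disk: closed disk of radius $R$ centered at the observer. For a control, $t_2=\inf\{t\ge0:x_O(t)^2+(y_O(t)-y_T(t))^2\le R^2\}$ (contact time), $t_f=\inf\{t\ge t_2:x_O(t)^2+(y_O(t)-y_T(t))^2>R^2\}$, and the observation time is $t_{\text{obs}}=t_f-t_2$ (taken to be $0$ if no contact occurs). The optimal observation time is the supremum of $t_{\text{obs}}$ over all controls. The Decision Line is the union of the two rays $\{(\pm s\alpha,\,y_T+s\sqrt{1-\alpha^2}):s\ge0\}$ from the initial target position, i.e. the set of points $Z$ whose Apollonius circle $\{P:|PZ|=\alpha|PT|\}$ with the target $T$ is tangent to the target's path; ''on or above'' it means in the region $\{(x,y):y-y_T\ge m|x|\}$. $\mathscr B_3$ denotes the set of states whose optimal observation time equals $2R/(1-\alpha)$. *)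

(* Defs.v *)
From HB Require Import structures.
From mathcomp Require Import all_boot all_order all_algebra.
From mathcomp Require Import all_classical all_reals all_analysis.
Set Implicit Arguments. Unset Strict Implicit. Unset Printing Implicit Defensive.
Import Order.TTheory GRing.Theory Num.Theory.
Local Open Scope classical_set_scope.
Local Open Scope ring_scope.

Section ObserverTarget.
Variable R : realType.

Definition obsX (alpha xO : R) (psi : R -> R) (t : R) : R :=
  xO + Rintegral (@lebesgue_measure R) `[0, t] (fun s => alpha * cos (psi s)).
Definition obsY (alpha yO : R) (psi : R -> R) (t : R) : R :=
  yO + Rintegral (@lebesgue_measure R) `[0, t] (fun s => alpha * sin (psi s)).
(* Target position (0, yT + t). *)
Definition targY (yT t : R) : R := yT + t.

Definition in_disk (alpha r xO yO yT : R) (psi : R -> R) (t : R) : Prop :=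
  (obsX alpha xO psi t) ^+ 2 + (obsY alpha yO psi t - targY yT t) ^+ 2 <= r ^+ 2.

Definition contact_time (alpha r xO yO yT : R) (psi : R -> R) : \bar R :=
  ereal_inf [set t%:E | t in [set t : R | 0 <= t /\ in_disk alpha r xO yO yT psi t]].

Definition exit_time (alpha r xO yO yT : R) (psi : R -> R) : \bar R :=
  ereal_inf [set t%:E | t in [set t : R |
    (contact_time alpha r xO yO yT psi <= t%:E)%E /\ ~ in_disk alpha r xO yO yT psi t]].

Definition obs_time (alpha r xO yO yT : R) (psi : R -> R) : \bar R :=
  if contact_time alpha r xO yO yT psi == +oo%E then 0%E
  else (exit_time alpha r xO yO yT psi - contact_time alpha r xO yO yT psi)%E.

Definition admissible (psi : R -> R) : Prop :=
  measurable_fun [set t : R | 0 <= t] psi.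

Definition optimal_obs_time (alpha r xO yO yT : R) : \bar R :=
  ereal_sup [set obs_time alpha r xO yO yT psi | psi in admissible].

End ObserverTarget.

(* Main.v *)
Require Import Defs.
From HB Require Import structures.
From mathcomp Require Import all_boot all_order all_algebra.
From mathcomp Require Import all_classical all_reals all_analysis.
From mathcomp Require Import ring lra measurable_realfun.
Import Order.TTheory GRing.Theory Num.Theory.
Import numFieldNormedType.Exports.
Local Open Scope classical_set_scope.
Local Open Scope ring_scope.

Section S.
Context {R : realType}.
Notation mu := (@lebesgue_measure R).

Lemma integ_bnd (A : set R) (f : R -> R) (M : R) : measurable A ->
  (mu A < +oo)%E -> measurable_fun A f -> (forall x, A x -> `|f x| <= M) ->
  mu.-integrable A (EFin \o f).
Proof.
move=> mA Afin mf bf; apply: measurable_bounded_integrable => //.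
apply: (@sub_boundedl _ _ _ _ (fun _ => M)); last exact: bounded_cst.
move=> x Ax /=; exact: le_trans (bf x Ax) (ler_norm M).
Qed.

Lemma mu_itv_fin (a b : R) bl br :
  (mu [set` Interval (BSide bl a) (BSide br b)] < +oo)%E.
Proof. by rewrite lebesgue_measure_itv; case: ifP => // _; rewrite /= -EFinD ltry. Qed.

Lemma fine_mu_cc (t : R) : 0 <= t -> fine (mu `[0, t]) = t.
Proof.
move=> t0; rewrite lebesgue_measure_itv /= lte_fin; case: ifP => /= [_|]; [lra | move/negbT; rewrite -leNgt; lra].
Qed.

Lemma fine_mu_oc (s t : R) : s <= t -> fine (mu `]s, t]) = t - s.
Proof.
move=> st; rewrite lebesgue_measure_itv /= lte_fin; case: ifP => /= [_|]; [lra | move/negbT; rewrite -leNgt; lra].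
Qed.

Lemma meas_ge0 : measurable [set x : R | 0 <= x].
Proof. by rewrite -set_itvcy; exact: measurable_itv. Qed.

Lemma integ_psi (A : set R) (psi : R -> R) (a : R) (g : R -> R) :
  measurable A -> (mu A < +oo)%E -> A `<=` [set x | 0 <= x] ->
  admissible psi -> continuous g -> (forall x, `|g x| <= 1) ->
  mu.-integrable A (EFin \o (fun s => a * g (psi s))).
Proof.
move=> mA Afin sA mpsi cg bg; apply: (@integ_bnd _ _ `|a|) => //.
  apply: measurable_funM; first exact: measurable_cst.
  apply: measurableT_comp; first exact: continuous_measurable_fun.
  exact: measurable_funS meas_ge0 sA mpsi.
by move=> x _; rewrite normrM -[X in _ <= X]mulr1 ler_wpM2l.
Qed.

Lemma obsY_incr (alpha yO : R) psi s t : 0 < alpha -> admissible psi -> 0 <= s -> s <= t ->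
  obsY alpha yO psi t - obsY alpha yO psi s <= alpha * (t - s).
Proof.
move=> a0 mpsi s0 st; rewrite /obsY.
rewrite (_ : forall u v : R, yO + u - (yO + v) = u - v); last by move=> u v; ring.
have sub0 : forall (b : itv_bound R), [set` Interval (BLeft 0) b] `<=` [set x | 0 <= x].
  by move=> b x /=; rewrite in_itv /= => /andP[].
rewrite Rintegral_itvB ?bnd_simp //; last first.
  apply: integ_psi => //; [exact: mu_itv_fin | exact: continuous_sin|].
  by move=> x; rewrite ler_norml sin_geN1 sin_le1.
have sub1 : [set` Interval (BRight s) (BRight t)] `<=` [set x | 0 <= x].
  by move=> x /=; rewrite in_itv /= => /andP[/ltW + _]; apply: le_trans.
apply: (le_trans (le_Rintegral (f2 := fun _ => alpha) _ _ _ _)) => //.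
- apply: integ_psi => //; [exact: mu_itv_fin | exact: continuous_sin|].
  by move=> x; rewrite ler_norml sin_geN1 sin_le1.
- apply: (@integ_bnd _ _ `|alpha|) => //; first exact: mu_itv_fin.
- by move=> x _ /=; rewrite -[X in _ <= X]mulr1 ler_wpM2l ?sin_le1 // ltW.
have := @Rintegral_cst _ _ R mu `]s, t] (measurable_itv _) alpha.
move=> ->. by rewrite fine_mu_oc.
Qed.

Lemma int_piece (a b tau t : R) : 0 <= tau -> 0 <= t ->
  Rintegral mu `[0,t] (fun s => if s <= tau then a else b) =
  if t <= tau then a * t else a * tau + b * (t - tau).
Proof.
move=> tau0 t0.
have mf : measurable_fun setT (fun s : R => if s <= tau then a else b).
  apply: measurable_fun_ifT; last 2 first.
  - exact: measurable_cst.
  - exact: measurable_cst.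
  by apply: measurable_fun_ler; [exact: measurable_id | exact: measurable_cst].
have bf : forall x : R, `|(if x <= tau then a else b)| <= `|a| + `|b|.
  by move=> x; case: ifP => _; rewrite ?lerDl ?lerDr.
case: ifP => ttau.
  rewrite (@eq_Rintegral _ _ _ mu `[0,t] (fun _ => a)); last first.
    move=> x; rewrite inE /= in_itv /= => /andP[_ xt].
    by rewrite (le_trans xt ttau).
  by rewrite (@Rintegral_cst _ _ R mu `[0, t] (measurable_itv _) a) fine_mu_cc.
have taut : tau <= t by move/negbT: ttau; rewrite -ltNge => /ltW.
have := @Rintegral_itvB R (fun s => if s <= tau then a else b) (BLeft 0) (BRight t) tau.
rewrite bnd_simp tau0 bnd_simp taut => /(_ _ erefl erefl) H.
rewrite -[LHS](subrK (Rintegral mu `[0,tau] (fun s => if s <= tau then a else b))).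
rewrite H; last first.
  apply: (@integ_bnd _ _ (`|a| + `|b|)) => //; first exact: mu_itv_fin.
  exact: measurable_funS mf.
rewrite (@eq_Rintegral _ _ _ mu `]tau, t] (fun _ => b)); last first.
  move=> x; rewrite inE /= in_itv /= => /andP[xt _].
  by rewrite leNgt xt.
rewrite (@eq_Rintegral _ _ _ mu `[0, tau] (fun _ => a)); last first.
  by move=> x; rewrite inE /= in_itv /= => /andP[_ ->].
rewrite (@Rintegral_cst _ _ R mu `[0, tau] (measurable_itv _) a).
rewrite (@Rintegral_cst _ _ R mu `]tau, t] (measurable_itv _) b).
rewrite fine_mu_oc // fine_mu_cc //; ring.
Qed.

Lemma no_disk_after (alpha r xO yO yT : R) psi s t : 0 < alpha -> alpha < 1 -> 0 < r ->
  admissible psi -> 0 <= s -> in_disk alpha r xO yO yT psi s ->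
  s + (2 * r) / (1 - alpha) < t -> ~ in_disk alpha r xO yO yT psi t.
Proof.
move=> a0 a1 r0 mpsi s0; rewrite /in_disk /targY => Hs Ht Hdt.
have a1' : 0 < 1 - alpha by lra.
have hD : (2 * r) / (1 - alpha) * (1 - alpha) = 2 * r.
  by rewrite mulfVK // gt_eqF.
have st : s <= t.
  have : 0 <= (2 * r) / (1 - alpha) by rewrite divr_ge0 // ltW // mulr_gt0.
  lra.
have Hinc := @obsY_incr alpha yO psi s t a0 mpsi s0 st.
set xs := obsX alpha xO psi s in Hs.
set xt := obsX alpha xO psi t in Hdt.
set ys := obsY alpha yO psi s in Hs Hinc.
set yt := obsY alpha yO psi t in Hdt Hinc.
set D := (2 * r) / (1 - alpha) in hD Ht.
have gs : ys - (yT + s) <= r.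
  rewrite leNgt; apply/negP => H.
  have : r ^+ 2 < (ys - (yT + s)) ^+ 2 by nra.
  have : 0 <= xs ^+ 2 by exact: sqr_ge0.
  lra.
have k : 2 * r < (1 - alpha) * (t - s).
  rewrite -hD mulrC ltr_pM2l //; lra.
have gt : yt - (yT + t) < - r by nra.
have : r ^+ 2 < (yt - (yT + t)) ^+ 2 by nra.
have : 0 <= xt ^+ 2 by exact: sqr_ge0.
lra.
Qed.

Lemma obs_le (alpha r xO yO yT : R) psi : 0 < alpha -> alpha < 1 -> 0 < r ->
  admissible psi ->
  (obs_time alpha r xO yO yT psi <= ((2 * r) / (1 - alpha))%:E)%E.
Proof.
move=> a0 a1 r0 mpsi.
have a1' : 0 < 1 - alpha by lra.
have D0 : 0 <= (2 * r) / (1 - alpha) by rewrite divr_ge0 // ltW // mulr_gt0.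
set D := (2 * r) / (1 - alpha) in D0 *.
rewrite /obs_time.
case: ifP => [_|/negbT Hc]; first by rewrite lee_fin.
set ct := contact_time alpha r xO yO yT psi in Hc *.
have ct0 : (0 <= ct)%E.
  apply: le_ereal_inf_tmp => _ [t [t0 _] <-]; by rewrite lee_fin.
have [c ctE] : exists c, ct = c%:E.
  move: ct0 Hc; case: ct => [c| |] //; by exists c.
have Hex : (exit_time alpha r xO yO yT psi <= (c + D)%:E)%E.
  apply/lee_addgt0Pr => e e0.
  have e20 : 0 < e / 2 by rewrite divr_gt0.
  have ctfin : ct \is a fin_num by rewrite ctE.
  have [_ [s [s0 Hs] <-]] := lb_ereal_inf_adherent e20 ctfin.
  move=> sc0; have sc : s < c + e / 2 by rewrite -lte_fin EFinD -ctE; exact: sc0.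
  have cs : c <= s.
    rewrite -lee_fin -ctE; apply: ereal_inf_lbound; by exists s.
  apply: (@le_trans _ _ (s + D + e / 2)%:E).
    apply: ereal_inf_lbound; exists (s + D + e / 2) => //; split.
      by rewrite -/ct ctE lee_fin; lra.
    by apply: (@no_disk_after alpha r xO yO yT psi s _ a0 a1 r0 mpsi s0 Hs); rewrite -/D; lra.
  by rewrite -EFinD lee_fin; lra.
rewrite ctE; move: Hex.
case: (exit_time alpha r xO yO yT psi) => [x| |] //=.
  by rewrite !lee_fin => ?; lra.
by move=> _; exact: leNye.
Qed.

Lemma traj (alpha xO yO tau th t : R) : 0 <= tau -> 0 <= t ->
  obsX alpha xO (fun u => if u <= tau then th else pi / 2) t =
    xO + (if t <= tau then alpha * cos th * t else alpha * cos th * tau) /\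
  obsY alpha yO (fun u => if u <= tau then th else pi / 2) t =
    yO + (if t <= tau then alpha * sin th * t
          else alpha * sin th * tau + alpha * (t - tau)).
Proof.
move=> tau0 t0; rewrite /obsX /obsY; split.
  rewrite (_ : (fun s => alpha * cos (if s <= tau then th else pi / 2)) =
     (fun s => if s <= tau then alpha * cos th else 0)); last first.
    by apply: funext => u; case: ifP => _ //; rewrite cos_pihalf mulr0.
  by rewrite int_piece //; case: ifP => _ //; rewrite mul0r addr0.
rewrite (_ : (fun s => alpha * sin (if s <= tau then th else pi / 2)) =
   (fun s => if s <= tau then alpha * sin th else alpha)); last first.
  by apply: funext => u; case: ifP => _ //; rewrite sin_pihalf mulr1.
  by rewrite int_piece.
Qed.

Lemma measurable_psi (tau th : R) :
  admissible (fun u : R => if u <= tau then th else pi / 2).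
Proof.
apply: (measurable_funS (E := setT)) => //.
apply: measurable_fun_ifT; last 2 first.
- exact: measurable_cst.
- exact: measurable_cst.
by apply: measurable_fun_ler; [exact: measurable_id | exact: measurable_cst].
Qed.

Lemma construct (alpha r xO yO yT : R) : 0 < alpha -> alpha < 1 -> 0 < r ->
  Num.sqrt (1 - alpha ^+ 2) / alpha * `|xO| <= yO - r - yT ->
  exists psi, admissible psi /\
    (((2 * r) / (1 - alpha))%:E <= obs_time alpha r xO yO yT psi)%E.
Proof.
move=> a0 a1 r0.
have a1' : 0 < 1 - alpha by lra.
have D0 : 0 <= (2 * r) / (1 - alpha) by rewrite divr_ge0 // ltW // mulr_gt0.
have hD : (2 * r) / (1 - alpha) * (1 - alpha) = 2 * r by rewrite mulfVK // gt_eqF.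
set D := (2 * r) / (1 - alpha) in D0 hD *.
have sa : 0 < 1 - alpha ^+ 2 by nra.
set s := Num.sqrt (1 - alpha ^+ 2).
have s0 : 0 < s by rewrite sqrtr_gt0.
have ss : s ^+ 2 = 1 - alpha ^+ 2 by rewrite sqr_sqrtr // ltW.
move=> Hm; set m := s / alpha in Hm *.
set ax := `|xO| in Hm *.
have ax0 : 0 <= ax by exact: normr_ge0.
set tau := ax / (alpha * s).
have tau0 : 0 <= tau by rewrite divr_ge0 // ltW // mulr_gt0.
set K := yO - r - yT - m * ax.
have K0 : 0 <= K by rewrite /K; lra.
set kap := K / (1 - alpha).
have kap0 : 0 <= kap by rewrite divr_ge0 // ltW.
have hk : (1 - alpha) * kap = K by rewrite /kap mulrC mulfVK // gt_eqF.
have htau : (1 - alpha ^+ 2) * tau = m * ax.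
  rewrite -ss /tau /m; field; by rewrite ?gt_eqF.
set ts := tau + kap.
have ts0 : 0 <= ts by rewrite /ts addr_ge0.
set c := if 0 <= xO then - s else s.
have hc : alpha * c * tau = - xO.
  rewrite /c /tau /ax; case: ifP => hx.
    rewrite ger0_norm //; field; by rewrite ?gt_eqF.
  rewrite ltr0_norm ?ltNge ?hx //; field; by rewrite ?gt_eqF.
have c2 : c ^+ 2 = 1 - alpha ^+ 2 by rewrite /c; case: ifP => _; rewrite ?sqrrN ss.
have cb' : -1 <= c <= 1.
  have H : c ^+ 2 <= 1 by rewrite c2; nra.
  apply/andP; split; nra.
have cb : c \in `[(-1), 1] by rewrite in_itv /= cb'.
set th := acos c.
have cth : cos th = c by rewrite /th acosK.
have sth : sin th = alpha.
  rewrite /th sin_acos //.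
  by rewrite c2 (_ : 1 - (1 - alpha ^+ 2) = alpha ^+ 2) ?sqrtr_sqr ?gtr0_norm //; ring.
set psi := fun u : R => if u <= tau then th else pi / 2.
have Htr := fun t (t0 : 0 <= t) => @traj alpha xO yO tau th t tau0 t0.
rewrite cth sth in Htr.
have tsE : ts = tau + kap by [].
have KE : K = yO - r - yT - m * ax by [].
have clA : forall t, ts <= t -> obsX alpha xO psi t = 0 /\
    obsY alpha yO psi t - targY yT t = r + (1 - alpha) * (ts - t).
  move=> t tst; have t0 : 0 <= t by lra.
  have [-> ->] := Htr t t0; rewrite /targY.
  case: (lerP t tau) => ttau.
    have tt : t = tau by lra.
    have k0 : kap = 0 by lra.
    rewrite tt; split; first lra.
    rewrite tsE k0; nra.
  split; first lra.
  rewrite tsE; nra.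
have clB : forall t, 0 <= t -> t < ts -> r < obsY alpha yO psi t - targY yT t.
  move=> t t0 tts; have [_ ->] := Htr t t0; rewrite /targY.
  case: (lerP t tau) => ttau.
    have h1 : 0 < (1 - alpha) * (tau + kap - t) by rewrite mulr_gt0 //; lra.
    have h2 : 0 <= alpha * (1 - alpha) * (tau - t) by rewrite mulr_ge0 ?mulr_ge0 //; lra.
    nra.
  have h1 : 0 < (1 - alpha) * (ts - t) by rewrite mulr_gt0 //; lra.
  nra.
exists psi; split; first exact: measurable_psi.
have ctE : contact_time alpha r xO yO yT psi = ts%:E.
  apply/eqP; rewrite eq_le; apply/andP; split.
    apply: ereal_inf_lbound; exists ts => //; split => //.
    rewrite /in_disk; have [-> ->] := clA ts (lexx ts); lra.
  apply: le_ereal_inf_tmp => _ [t [t0 Hd] <-]; rewrite lee_fin.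
  rewrite leNgt; apply/negP => tts; move: Hd; rewrite /in_disk.
  have := clB t t0 tts; have : 0 <= obsX alpha xO psi t ^+ 2 by exact: sqr_ge0.
  set g := obsY alpha yO psi t - targY yT t; move=> ? ?; nra.
have exE : ((ts + D)%:E <= exit_time alpha r xO yO yT psi)%E.
  apply: le_ereal_inf_tmp => _ [t [tst Hd] <-]; rewrite lee_fin.
  rewrite ctE lee_fin in tst.
  rewrite leNgt; apply/negP => tD; apply: Hd; rewrite /in_disk.
  have [-> ->] := clA t tst.
  have uD : (1 - alpha) * (t - ts) <= 2 * r.
    rewrite -hD [D * _]mulrC ler_pM2l //; lra.
  have u0 : 0 <= (1 - alpha) * (t - ts) by rewrite mulr_ge0 //; lra.
  have := mulr_ge0 u0 (_ : 0 <= 2 * r - (1 - alpha) * (t - ts)).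
  move=> /(_ ltac:(lra)) H.
  rewrite (_ : r + (1 - alpha) * (ts - t) = r - (1 - alpha) * (t - ts)); last by ring.
  set u := (1 - alpha) * (t - ts) in H *; nra.
rewrite /obs_time ctE /=.
move: exE; case: (exit_time alpha r xO yO yT psi) => [x| |] //=.
  by rewrite !lee_fin => ?; lra.
by move=> _; exact: leey.
Qed.
End S.

Theorem lemma7 (R : realType) (alpha r xO yO yT : R) :
  0 < alpha -> alpha < 1 -> 0 < r ->
  let m := Num.sqrt (1 - alpha ^+ 2) / alpha in
  m * `|xO| <= yO - r - yT ->
  optimal_obs_time alpha r xO yO yT = ((2 * r) / (1 - alpha))%:E.
Proof.
move=> a0 a1 r0 m Hm.
apply/eqP; rewrite eq_le; apply/andP; split.
  apply: ge_ereal_sup => _ [psi mpsi <-]; exact: obs_le.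
have [psi [mpsi H]] := @construct R alpha r xO yO yT a0 a1 r0 Hm.
apply: (le_trans H); apply: ereal_sup_ubound; by exists psi.
Qed.
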